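(* Let $L>0$, $N\in\mathbb{N}_+$, $h=L/N$, $\epsilon>0$, $\theta_0>0$, $\tau>0$, $\alpha\in(0,1)$, $\rho_u>0$, $\rho_w>0$, and let $u^n\in\mathcal{C}_{per}$ with $-1<u^n<1$ pointwise. Let $u^{n+1}\in\mathcal{C}_{per}$ (with $-1<u^{n+1}<1$ pointwise) be the solution of the first-order convex splitting scheme, i.e. together with some $w^{n+1}\in\mathcal{C}_{per}$, $$u^{n+1}-u^n=\tau\Delta_hw^{n+1},\qquad w^{n+1}=\log(1+u^{n+1})-\log(1-u^{n+1})-\theta_0u^n-\epsilon^2\Delta_hu^{n+1}.$$ Let $\{u_2^{(k)}\}$ be the sequence generated by Algorithm 1 (described in the context). Then $\lim_{k\to\infty}\|u_2^{(k)}-u^{n+1}\|_2=0$.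
   Context: $\mathcal{C}_{per}$ is the space of real grid functions $\nu=(\nu_{i,j,k})_{i,j,k\in\mathbb{Z}}$ that are $N$-periodic in each index (values at cell centres of a uniform grid of mesh size $h$ on $(0,L)^3$). Inner product $\langle\nu,\xi\rangle=h^2\sum_{i,j,k=1}^N\nu_{i,j,k}\xi_{i,j,k}$, $\|\nu\|_2=\langle\nu,\nu\rangle^{1/2}$. Discrete Laplacian $(\Delta_h\nu)_{i,j,k}=h^{-2}(\nu_{i+1,j,k}+\nu_{i-1,j,k}+\nu_{i,j+1,k}+\nu_{i,j-1,k}+\nu_{i,j,k+1}+\nu_{i,j,k-1}-6\nu_{i,j,k})$. Operations and inequalities are pointwise. Such a solution $(u^{n+1},w^{n+1})$ of the scheme exists and is unique for $-1<u^n<1$. Algorithm 1: set $u_2^{(0)}=u^n$, $w_2^{(0)}=0$, $u_3^{(0)}=0$, $w_3^{(0)}=0$. For $k=0,1,2,\dots$: (i) find $u_1^{(k+1)},w_1^{(k+1)}\in\mathcal{C}_{per}$ solving $-\epsilon^2\Delta_hu_1^{(k+1)}-\alpha w_1^{(k+1)}+u_3^{(k)}+\rho_u(u_1^{(k+1)}-u_2^{(k)})=0$ and $\alpha(-u_1^{(k+1)}+u^n)+\tau\Delta_hw_1^{(k+1)}-w_3^{(k)}-\rho_w(w_1^{(k+1)}-w_2^{(k)})=0$; (ii) find $u_2^{(k+1)},w_2^{(k+1)}\in\mathcal{C}_{per}$ with $-1<u_2^{(k+1)}<1$ solving $\log(1+u_2^{(k+1)})-\log(1-u_2^{(k+1)})-\theta_0u^n-(1-\alpha)w_2^{(k+1)}-u_3^{(k)}-\rho_u(u_1^{(k+1)}-u_2^{(k+1)})=0$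 and $(1-\alpha)(-u_2^{(k+1)}+u^n)+w_3^{(k)}+\rho_w(w_1^{(k+1)}-w_2^{(k+1)})=0$; (iii) set $u_3^{(k+1)}=u_3^{(k)}+\rho_u(u_1^{(k+1)}-u_2^{(k+1)})$, $w_3^{(k+1)}=w_3^{(k)}+\rho_w(w_1^{(k+1)}-w_2^{(k+1)})$. *)

(* Defs.v *)
From Stdlib Require Import Reals ZArith Lra.
Open Scope R_scope.

Definition gridfun := Z -> Z -> Z -> R.

Definition Cper (N : nat) (nu : gridfun) : Prop :=
  forall i j k : Z,
    nu (i + Z.of_nat N)%Z j k = nu i j k /\
    nu i (j + Z.of_nat N)%Z k = nu i j k /\
    nu i j (k + Z.of_nat N)%Z = nu i j k.

Definition lap_h (h : R) (nu : gridfun) : gridfun :=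
  fun i j k =>
    / (h * h) * (nu (i + 1)%Z j k + nu (i - 1)%Z j k
                 + nu i (j + 1)%Z k + nu i (j - 1)%Z k
                 + nu i j (k + 1)%Z + nu i j (k - 1)%Z
                 - 6 * nu i j k).

Definition gsum (N : nat) (f : gridfun) : R :=
  sum_f_R0 (fun a =>
    sum_f_R0 (fun b =>
      sum_f_R0 (fun c =>
        f (Z.of_nat (S a)) (Z.of_nat (S b)) (Z.of_nat (S c))) (pred N)) (pred N))
    (pred N).

Definition ginner (N : nat) (h : R) (nu xi : gridfun) : R :=
  h ^ 2 * gsum N (fun i j k => nu i j k * xi i j k).

Definition gnorm2 (N : nat) (h : R) (nu : gridfun) : R :=
  sqrt (ginner N h nu nu).

Definition gsub (nu xi : gridfun) : gridfun := fun i j k => nu i j k - xi i j k.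

(* Main.v *)
Require Import Defs.
From Stdlib Require Import Reals ZArith Lra Lia Psatz.
Open Scope R_scope.

Lemma exp_ge1 x : 1 + x <= exp x.
Proof. destruct (Req_dec x 0) as [->|H]. rewrite exp_0; lra. left; now apply exp_ineq1. Qed.

Lemma ln_le_m1 t : 0 < t -> ln t <= t - 1.
Proof. intros Ht. pose proof (exp_ge1 (ln t)). rewrite exp_ln in H; lra. Qed.

Lemma ln_diff_ge s t : 0 < s -> 0 < t -> 1 - t / s <= ln s - ln t.
Proof.
  intros Hs Ht. assert (Hq : 0 < t / s) by (apply Rdiv_lt_0_compat; lra).
  pose proof (ln_le_m1 _ Hq). unfold Rdiv in H.
  assert (Hi : 0 < / s) by (apply Rinv_0_lt_compat; lra).
  rewrite (ln_mult t (/ s) Ht Hi) in H. rewrite (ln_Rinv s Hs) in H. unfold Rdiv; lra.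
Qed.

Definition Fl x := ln (1 + x) - ln (1 - x).

Lemma Fl_ge x y : -1 < x < 1 -> -1 < y < 1 -> y <= x -> x - y <= Fl x - Fl y.
Proof.
  intros Hx Hy Hxy. unfold Fl.
  pose proof (ln_diff_ge (1+x) (1+y) ltac:(lra) ltac:(lra)).
  pose proof (ln_diff_ge (1-y) (1-x) ltac:(lra) ltac:(lra)).
  assert (A : (x - y)/2 <= 1 - (1+y)/(1+x)).
  { replace (1 - (1+y)/(1+x)) with ((x-y)/(1+x)) by (field; lra).
    unfold Rdiv. apply Rmult_le_compat_l; [lra|]. apply Rinv_le_contravar; lra. }
  assert (B : (x - y)/2 <= 1 - (1-x)/(1-y)).
  { replace (1 - (1-x)/(1-y)) with ((x-y)/(1-y)) by (field; lra).
    unfold Rdiv. apply Rmult_le_compat_l; [lra|]. apply Rinv_le_contravar; lra. }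
  lra.
Qed.

Lemma Fl_mono x y : -1 < x < 1 -> -1 < y < 1 -> (x - y)^2 <= (Fl x - Fl y) * (x - y).
Proof.
  intros Hx Hy. destruct (Rle_dec y x).
  - pose proof (Fl_ge x y Hx Hy r). nra.
  - pose proof (Fl_ge y x Hy Hx ltac:(lra)). nra.
Qed.

Lemma sum_ext (f g : nat -> R) n : (forall a, f a = g a) -> sum_f_R0 f n = sum_f_R0 g n.
Proof. intros H. induction n; simpl; rewrite ?IHn, ?H; reflexivity. Qed.

Lemma sum_scal c (f : nat -> R) n : sum_f_R0 (fun i => c * f i) n = c * sum_f_R0 f n.
Proof. induction n; simpl; [ring|rewrite IHn; ring]. Qed.

Lemma gsum_ext N f g : (forall i j k, f i j k = g i j k) -> gsum N f = gsum N g.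
Proof. intros H. unfold gsum. apply sum_ext; intro; apply sum_ext; intro; apply sum_ext; intro; apply H. Qed.

Lemma gsum_plus N f g : gsum N (fun i j k => f i j k + g i j k) = gsum N f + gsum N g.
Proof.
  unfold gsum. rewrite <- sum_plus. apply sum_ext; intro.
  rewrite <- sum_plus. apply sum_ext; intro. apply sum_plus.
Qed.

Lemma gsum_scal N c f : gsum N (fun i j k => c * f i j k) = c * gsum N f.
Proof.
  unfold gsum. rewrite <- sum_scal. apply sum_ext; intro.
  rewrite <- sum_scal. apply sum_ext; intro. apply sum_scal.
Qed.

Lemma gsum_le N f g : (forall i j k, f i j k <= g i j k) -> gsum N f <= gsum N g.
Proof. intros H. unfold gsum. apply sum_Rle; intros; apply sum_Rle; intros; apply sum_Rle; intros; apply H. Qed.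

Lemma gsum_nonneg N f : (forall i j k, 0 <= f i j k) -> 0 <= gsum N f.
Proof. intros H. unfold gsum. apply cond_pos_sum; intros; apply cond_pos_sum; intros; apply cond_pos_sum; intros; apply H. Qed.

Lemma shift_aux (f : Z -> R) n :
  sum_f_R0 (fun a => f (Z.of_nat (S a) + 1)%Z) n
  = sum_f_R0 (fun a => f (Z.of_nat (S a))) n - f 1%Z + f (Z.of_nat (S n) + 1)%Z.
Proof.
  induction n.
  - simpl. replace (Z.of_nat 1) with 1%Z by reflexivity. ring.
  - rewrite !tech5. rewrite IHn.
    replace (Z.of_nat (S n) + 1)%Z with (Z.of_nat (S (S n))) by lia. ring.
Qed.

Lemma shift1 (f : Z -> R) N : (0 < N)%nat -> (forall z, f (z + Z.of_nat N)%Z = f z) ->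
  sum_f_R0 (fun a => f (Z.of_nat (S a) + 1)%Z) (pred N) = sum_f_R0 (fun a => f (Z.of_nat (S a))) (pred N).
Proof.
  intros HN Hp. rewrite shift_aux.
  replace (Z.of_nat (S (pred N)) + 1)%Z with (1 + Z.of_nat N)%Z by lia.
  rewrite Hp. ring.
Qed.

Lemma gshift_i N g : (0 < N)%nat -> (forall i j k, g (i + Z.of_nat N)%Z j k = g i j k) ->
  gsum N (fun i j k => g (i+1)%Z j k) = gsum N g.
Proof.
  intros HN Hp. unfold gsum.
  apply (shift1 (fun z => sum_f_R0 (fun b => sum_f_R0 (fun c => g z (Z.of_nat (S b)) (Z.of_nat (S c))) (pred N)) (pred N))); auto.
  intro z. apply sum_ext; intro; apply sum_ext; intro. apply Hp.
Qed.

Lemma gshift_j N g : (0 < N)%nat -> (forall i j k, g i (j + Z.of_nat N)%Z k = g i j k) ->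
  gsum N (fun i j k => g i (j+1)%Z k) = gsum N g.
Proof.
  intros HN Hp. unfold gsum. apply sum_ext; intro a.
  apply (shift1 (fun z => sum_f_R0 (fun c => g (Z.of_nat (S a)) z (Z.of_nat (S c))) (pred N))); auto.
  intro z. apply sum_ext; intro. apply Hp.
Qed.

Lemma gshift_k N g : (0 < N)%nat -> (forall i j k, g i j (k + Z.of_nat N)%Z = g i j k) ->
  gsum N (fun i j k => g i j (k+1)%Z) = gsum N g.
Proof.
  intros HN Hp. unfold gsum. apply sum_ext; intro a. apply sum_ext; intro b.
  apply (shift1 (fun z => g (Z.of_nat (S a)) (Z.of_nat (S b)) z)); auto.
Qed.

Lemma lap_nonneg N h a : (0 < N)%nat -> h <> 0 -> Cper N a ->
  0 <= gsum N (fun i j k => - lap_h h a i j k * a i j k).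
Proof.
  intros HN Hh Hp.
  assert (E : gsum N (fun i j k => - lap_h h a i j k * a i j k) =
     / (h*h) * (gsum N (fun i j k => (a i j k - a (i+1)%Z j k) * a i j k)
             + gsum N (fun i j k => (a i j k - a (i-1)%Z j k) * a i j k)
             + gsum N (fun i j k => (a i j k - a i (j+1)%Z k) * a i j k)
             + gsum N (fun i j k => (a i j k - a i (j-1)%Z k) * a i j k)
             + gsum N (fun i j k => (a i j k - a i j (k+1)%Z) * a i j k)
             + gsum N (fun i j k => (a i j k - a i j (k-1)%Z) * a i j k))).
  { rewrite <- !gsum_plus. rewrite <- gsum_scal. apply gsum_ext; intros.
    unfold lap_h. ring. }
  rewrite E.
  rewrite <- (gshift_i N (fun i j k => (a i j k - a (i-1)%Z j k) * a i j k)); auto.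
  2:{ intros i j k. destruct (Hp i j k) as [H1 _]. destruct (Hp (i-1)%Z j k) as [H2 _].
      replace (i + Z.of_nat N - 1)%Z with (i - 1 + Z.of_nat N)%Z by lia. rewrite H1, H2. reflexivity. }
  rewrite <- (gshift_j N (fun i j k => (a i j k - a i (j-1)%Z k) * a i j k)); auto.
  2:{ intros i j k. destruct (Hp i j k) as [_ [H1 _]]. destruct (Hp i (j-1)%Z k) as [_ [H2 _]].
      replace (j + Z.of_nat N - 1)%Z with (j - 1 + Z.of_nat N)%Z by lia. rewrite H1, H2. reflexivity. }
  rewrite <- (gshift_k N (fun i j k => (a i j k - a i j (k-1)%Z) * a i j k)); auto.
  2:{ intros i j k. destruct (Hp i j k) as [_ [_ H1]]. destruct (Hp i j (k-1)%Z) as [_ [_ H2]].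
      replace (k + Z.of_nat N - 1)%Z with (k - 1 + Z.of_nat N)%Z by lia. rewrite H1, H2. reflexivity. }
  apply Rmult_le_pos.
  - left. apply Rinv_0_lt_compat. assert (0 < h*h) by (apply Rsqr_pos_lt; auto). exact H.
  - assert (Hr : forall x y : R, 0 <= x + y -> 0 <= x + y) by auto.
    rewrite (Rplus_comm _ (gsum N (fun i j k => (a i j (k+1)%Z - a i j (k + 1 - 1)%Z) * a i j (k+1)%Z))).
    rewrite <- !Rplus_assoc. rewrite <- !gsum_plus.
    apply gsum_nonneg; intros i j k.
    replace (i+1-1)%Z with i by lia. replace (j+1-1)%Z with j by lia. replace (k+1-1)%Z with k by lia.
    set (x0 := a i j k). set (x1 := a (i+1)%Z j k). set (x2 := a i (j+1)%Z k). set (x3 := a i j (k+1)%Z).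
    match goal with |- 0 <= ?e => replace e with ((x0-x1)^2 + (x0-x2)^2 + (x0-x3)^2) by ring end.
    pose proof (pow2_ge_0 (x0-x1)). pose proof (pow2_ge_0 (x0-x2)). pose proof (pow2_ge_0 (x0-x3)). lra.
Qed.
Definition Vf ru rw p q c d := p^2/ru + q^2/rw + ru*c^2 + rw*d^2.

Lemma pt_id alpha th ru rw un U1 W1 U2 W2 U2o W2o U3o W3o U3 W3 Us Ws A1 B1 As Bs F2 F2o Fs :
  ru <> 0 -> rw <> 0 ->
  U3 = U3o + ru*(U1-U2) ->
  W3 = W3o + rw*(W1-W2) ->
  U3o = F2o - th*un - (1-alpha)*W2o ->
  W3o = (1-alpha)*(U2o-un) ->
  F2 = th*un + (1-alpha)*W2 + U3o + ru*(U1-U2) ->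
  W1 = W2 + ((1-alpha)*(U2-un) - W3o)/rw ->
  A1 = - alpha*W1 + U3o + ru*(U1-U2o) ->
  B1 = - alpha*(-U1+un) + W3o + rw*(W1-W2o) ->
  Bs = Us - un ->
  As = Fs - th*un - Ws ->
  2*((-(A1-As))*(U1-Us) + (-(B1-Bs))*(W1-Ws)) + 2*((F2-Fs)*(U2-Us)) + 2*((F2-F2o)*(U2-U2o))
  = Vf ru rw (U3o - (Fs - th*un - (1-alpha)*Ws)) (W3o - (1-alpha)*(Us-un)) (U2o-Us) (W2o-Ws)
  - Vf ru rw (U3 - (Fs - th*un - (1-alpha)*Ws)) (W3 - (1-alpha)*(Us-un)) (U2-Us) (W2-Ws)
  - ((U3-U3o)^2/ru + (W3-W3o)^2/rw + ru*(U2-U2o)^2 + rw*(W2-W2o)^2).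
Proof.
  intros Hru Hrw H5 H6 HR1 HR2 HE3 HE4 HE1 HE2 HS1 HS2.
  subst A1 B1 As Bs U3 W3 F2. subst W1. subst U3o W3o. unfold Vf. field. split; auto.
Qed.

Lemma lap_sub h a b i j k : lap_h h (gsub a b) i j k = lap_h h a i j k - lap_h h b i j k.
Proof. unfold lap_h, gsub. ring. Qed.

Lemma Cper_sub N a b : Cper N a -> Cper N b -> Cper N (gsub a b).
Proof.
  intros Ha Hb i j k. unfold gsub. destruct (Ha i j k) as [? [? ?]]. destruct (Hb i j k) as [? [? ?]].
  repeat split; congruence.
Qed.

Lemma sqdiv_nonneg x r : 0 < r -> 0 <= x^2 / r.
Proof. intros. unfold Rdiv. apply Rmult_le_pos. apply pow2_ge_0. left; apply Rinv_0_lt_compat; auto. Qed.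

Lemma cv_decr_diff (W C : nat -> R) :
  (forall k, 0 <= W k) -> (forall k, 0 <= C k) -> (forall k, 2 * C k <= W k - W (S k)) ->
  Un_cv C 0.
Proof.
  intros HW HC Hd.
  assert (Hdec : Un_decreasing W) by (intro n; pose proof (Hd n); pose proof (HC n); lra).
  assert (Hlb : has_lb W).
  { exists 0. intros x [i ->]. unfold opp_seq. pose proof (HW i). lra. }
  destruct (decreasing_cv W Hdec Hlb) as [l Hl].
  intros e He. destruct (Hl (e) He) as [K HK]. exists K. intros n Hn.
  pose proof (HK n Hn). pose proof (HK (S n) ltac:(lia)). unfold R_dist in *.
  pose proof (Hd n). pose proof (HC n).
  rewrite Rminus_0_r, Rabs_right by lra.
  apply Rabs_def2 in H. apply Rabs_def2 in H0. lra.
Qed.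
Theorem theorem4p4
  (L : R) (N : nat) (eps theta0 tau alpha rho_u rho_w : R)
  (un unp1 wnp1 : gridfun)
  (u1 w1 u2 w2 u3 w3 : nat -> gridfun) :
  0 < L -> (0 < N)%nat ->
  0 < eps -> 0 < theta0 -> 0 < tau -> 0 < alpha < 1 ->
  0 < rho_u -> 0 < rho_w ->
  let h := L / INR N in
  (* u^n in C_per with -1 < u^n < 1 *)
  Cper N un -> (forall i j k, -1 < un i j k < 1) ->
  (* (u^{n+1}, w^{n+1}) solves the convex splitting scheme *)
  Cper N unp1 -> Cper N wnp1 -> (forall i j k, -1 < unp1 i j k < 1) ->
  (forall i j k, unp1 i j k - un i j k = tau * lap_h h wnp1 i j k) ->
  (forall i j k, wnp1 i j k =
      ln (1 + unp1 i j k) - ln (1 - unp1 i j k) - theta0 * un i j k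
      - eps ^ 2 * lap_h h unp1 i j k) ->
  (* Algorithm 1: initialisation *)
  u2 0%nat = un -> w2 0%nat = (fun _ _ _ => 0) ->
  u3 0%nat = (fun _ _ _ => 0) -> w3 0%nat = (fun _ _ _ => 0) ->
  (* Algorithm 1: iterates *)
  (forall m, Cper N (u1 (S m)) /\ Cper N (w1 (S m)) /\
             Cper N (u2 (S m)) /\ Cper N (w2 (S m))) ->
  (* step (i) *)
  (forall m i j k,
      - eps ^ 2 * lap_h h (u1 (S m)) i j k - alpha * w1 (S m) i j k
      + u3 m i j k + rho_u * (u1 (S m) i j k - u2 m i j k) = 0 /\
      alpha * (- u1 (S m) i j k + un i j k) + tau * lap_h h (w1 (S m)) i j k
      - w3 m i j k - rho_w * (w1 (S m) i j k - w2 m i j k) = 0) ->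
  (* step (ii) *)
  (forall m i j k,
      -1 < u2 (S m) i j k < 1 /\
      ln (1 + u2 (S m) i j k) - ln (1 - u2 (S m) i j k) - theta0 * un i j k
      - (1 - alpha) * w2 (S m) i j k - u3 m i j k
      - rho_u * (u1 (S m) i j k - u2 (S m) i j k) = 0 /\
      (1 - alpha) * (- u2 (S m) i j k + un i j k) + w3 m i j k
      + rho_w * (w1 (S m) i j k - w2 (S m) i j k) = 0) ->
  (* step (iii) *)
  (forall m i j k,
      u3 (S m) i j k = u3 m i j k + rho_u * (u1 (S m) i j k - u2 (S m) i j k) /\
      w3 (S m) i j k = w3 m i j k + rho_w * (w1 (S m) i j k - w2 (S m) i j k)) ->
  Un_cv (fun m => gnorm2 N h (gsub (u2 m) unp1)) 0.
Proof.
  intros HL HN Heps Hth Htau Hal Hru Hrw h Hpun Hun Hpu Hpw Hu Hs1 Hs2 I1 I2 I3 I4 Hper Hi Hii Hiii.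
  assert (Hh : 0 < h) by (unfold h; apply Rdiv_lt_0_compat; auto; apply lt_0_INR; auto).
  set (U3s := fun i j k => Fl (unp1 i j k) - theta0 * un i j k - (1 - alpha) * wnp1 i j k).
  set (W3s := fun i j k => (1 - alpha) * (unp1 i j k - un i j k)).
  set (V := fun m => gsum N (fun i j k => Vf rho_u rho_w (u3 m i j k - U3s i j k) (w3 m i j k - W3s i j k)
                                   (u2 m i j k - unp1 i j k) (w2 m i j k - wnp1 i j k))).
  set (C := fun m => gsum N (fun i j k => (u2 m i j k - unp1 i j k)^2)).
  assert (HV : forall m, 0 <= V m).
  { intro m. apply gsum_nonneg; intros i j k. unfold Vf.
    pose proof (sqdiv_nonneg (u3 m i j k - U3s i j k) rho_u Hru).
    pose proof (sqdiv_nonneg (w3 m i j k - W3s i j k) rho_w Hrw).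
    pose proof (pow2_ge_0 (u2 m i j k - unp1 i j k)). pose proof (pow2_ge_0 (w2 m i j k - wnp1 i j k)).
    nra. }
  assert (HC : forall m, 0 <= C m) by (intro; apply gsum_nonneg; intros; apply pow2_ge_0).
  assert (Hkey : forall m, 2 * C (S (S m)) <= V (S m) - V (S (S m))).
  { intro m.
    set (g1 := fun i j k => - lap_h h (gsub (u1 (S (S m))) unp1) i j k * gsub (u1 (S (S m))) unp1 i j k).
    set (g2 := fun i j k => - lap_h h (gsub (w1 (S (S m))) wnp1) i j k * gsub (w1 (S (S m))) wnp1 i j k).
    assert (Hg1 : 0 <= gsum N g1).
    { apply lap_nonneg; auto. lra. apply Cper_sub; auto. apply Hper. }
    assert (Hg2 : 0 <= gsum N g2).
    { apply lap_nonneg; auto. lra. apply Cper_sub; auto. apply Hper. }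
    assert (Hpt : forall i j k,
       (fun i j k => Vf rho_u rho_w (u3 (S (S m)) i j k - U3s i j k) (w3 (S (S m)) i j k - W3s i j k)
                                   (u2 (S (S m)) i j k - unp1 i j k) (w2 (S (S m)) i j k - wnp1 i j k)
           + (2 * eps^2 * g1 i j k + 2 * tau * g2 i j k + 2 * (u2 (S (S m)) i j k - unp1 i j k)^2)) i j k
       <= (fun i j k => Vf rho_u rho_w (u3 (S m) i j k - U3s i j k) (w3 (S m) i j k - W3s i j k)
                                   (u2 (S m) i j k - unp1 i j k) (w2 (S m) i j k - wnp1 i j k)) i j k).
    { intros i j k. cbv beta. unfold g1, g2. rewrite !lap_sub. unfold gsub.
      destruct (Hi (S m) i j k) as [E1 E2].
      destruct (Hii (S m) i j k) as [Hr1 [E3 E4]].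
      destruct (Hii m i j k) as [Hr0 [E3o E4o]].
      destruct (Hiii (S m) i j k) as [E5 E6].
      destruct (Hiii m i j k) as [E5o E6o].
      pose proof (Hs1 i j k) as S1. pose proof (Hs2 i j k) as S2.
      pose proof (Hu i j k) as Hr2.
      set (U1 := u1 (S (S m)) i j k) in *. set (W1 := w1 (S (S m)) i j k) in *.
      set (U2 := u2 (S (S m)) i j k) in *. set (W2 := w2 (S (S m)) i j k) in *.
      set (U2o := u2 (S m) i j k) in *. set (W2o := w2 (S m) i j k) in *.
      set (U3o := u3 (S m) i j k) in *. set (W3o := w3 (S m) i j k) in *.
      set (U3 := u3 (S (S m)) i j k) in *. set (W3 := w3 (S (S m)) i j k) in *.
      set (Us := unp1 i j k) in *. set (Ws := wnp1 i j k) in *.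
      set (LU1 := lap_h h (u1 (S (S m))) i j k) in *. set (LW1 := lap_h h (w1 (S (S m))) i j k) in *.
      set (LUs := lap_h h unp1 i j k) in *. set (LWs := lap_h h wnp1 i j k) in *.
      set (vn := un i j k) in *.
      assert (HW1 : W1 = W2 + ((1-alpha)*(U2-vn) - W3o)/rho_w).
      { replace ((1-alpha)*(U2-vn) - W3o) with (rho_w*(W1-W2)) by lra. field. lra. }
      pose proof (pt_id alpha theta0 rho_u rho_w vn U1 W1 U2 W2 U2o W2o U3o W3o U3 W3 Us Ws
                   (eps^2*LU1) (tau*LW1) (eps^2*LUs) (tau*LWs) (Fl U2) (Fl U2o) (Fl Us)
                   ltac:(lra) ltac:(lra) E5 E6 ltac:(unfold Fl; lra) ltac:(lra) ltac:(unfold Fl; lra)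
                   HW1 ltac:(lra) ltac:(lra) ltac:(lra) ltac:(unfold Fl; lra)) as Hid.
      pose proof (Fl_mono U2 Us Hr1 Hr2). pose proof (Fl_mono U2 U2o Hr1 Hr0).
      pose proof (sqdiv_nonneg (U3-U3o) rho_u Hru). pose proof (sqdiv_nonneg (W3-W3o) rho_w Hrw).
      pose proof (pow2_ge_0 (U2-U2o)). pose proof (pow2_ge_0 (W2-W2o)).
      assert (0 <= rho_u * (U2-U2o)^2) by (apply Rmult_le_pos; lra).
      assert (0 <= rho_w * (W2-W2o)^2) by (apply Rmult_le_pos; lra).
      unfold U3s, W3s. fold Us Ws vn.
      replace (Fl Us) with (Fl Us) by reflexivity.
      lra. }
    pose proof (gsum_le N _ _ Hpt) as Hs. rewrite gsum_plus in Hs.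
    rewrite !gsum_plus in Hs. rewrite !gsum_scal in Hs.
    unfold V, C. fold g1 g2 in Hs.
    pose proof (Rmult_le_pos _ _ (Rmult_le_pos 2 (eps^2) ltac:(lra) (pow2_ge_0 eps)) Hg1).
    assert (0 <= 2 * tau * gsum N g2) by (apply Rmult_le_pos; lra).
    lra. }
  pose proof (cv_decr_diff (fun k => V (S k)) (fun k => C (S (S k))) (fun k => HV (S k))
                (fun k => HC (S (S k))) Hkey) as Hcv.
  intros e He.
  assert (Hd : 0 < e^2 / (h^2 + 1)).
  { apply Rdiv_lt_0_compat. apply pow_lt; auto. pose proof (pow2_ge_0 h). lra. }
  destruct (Hcv _ Hd) as [K HK]. exists (S (S K)). intros n Hn.
  destruct n as [|[|n]]; try lia.
  specialize (HK n ltac:(lia)). unfold R_dist in *. rewrite Rminus_0_r in *.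
  rewrite Rabs_right in HK by (apply Rle_ge, HC).
  assert (Eg : gnorm2 N h (gsub (u2 (S (S n))) unp1) = sqrt (h^2 * C (S (S n)))).
  { unfold gnorm2, ginner. f_equal. f_equal. apply gsum_ext. intros. unfold gsub. ring. }
  rewrite Eg. pose proof (HC (S (S n))).
  rewrite Rabs_right by (apply Rle_ge, sqrt_pos).
  assert (h^2 * C (S (S n)) < e^2).
  { apply (Rmult_lt_compat_l (h^2+1)) in HK; [|pose proof (pow2_ge_0 h); lra].
    replace ((h^2+1) * (e^2/(h^2+1))) with (e^2) in HK by (field; pose proof (pow2_ge_0 h); lra).
    nra. }
  apply Rlt_le_trans with (sqrt (e^2)).
  - apply sqrt_lt_1; try lra. apply Rmult_le_pos; auto. apply pow2_ge_0. apply pow2_ge_0.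
  - rewrite sqrt_pow2; lra.
Qed.
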